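(* Let $(X,\tau)$ be a Hausdorff extended locally convex space having a countable neighborhood base at $0_X$, and let $\tau_F$ be its finest locally convex topology. Then the following are equivalent: (a) $(X,\tau_F)$ is metrizable; (b) for every $\tau$-continuous extended seminorm $\rho$ on $X$, the quotient space $X/X^{\rho}_{fin}$ is finite dimensional, where $X^\rho_{fin}=\{x\in X:\rho(x)<\infty\}$.
   Context: An extended seminorm on a vector space $X$ over $\mathbb{R}$ or $\mathbb{C}$ is a map $\rho:X\to[0,\infty]$ with $\rho(\alpha x)=|\alpha|\rho(x)$ and $\rho(x+y)\le\rho(x)+\rho(y)$. An extended locally convex space $(X,\tau)$ is a vector space with the topology induced by a family $\{\rho_i\}$ of extended seminorms (neighborhood base at $x_0$: $\{x:\max_{i\in J}\rho_i(x-x_0)<\varepsilon\}$, $J$ finite, $\varepsilon>0$). A locally convex topology is one induced in this way by finite-valued seminorms. The finest locally convex topology of $(X,\tau)$ is the locally convex topology $\tau_F\subseteq\tau$ such that every locally convex topology $\sigma\subseteq\tau$ on $X$ satisfies $\sigma\subseteq\tau_F$. *)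

(* Defs.v *)
(* Scalars: a numFieldType K together with its
   absolute value nK : K -> R (R : realType); the statement instantiates
   (K, nK) to (R, |.|) and to (R[i], complex modulus). *)
From mathcomp Require Import all_boot all_order all_algebra.
From mathcomp Require Import all_classical all_reals all_analysis.
From mathcomp Require Import complex.
Set Implicit Arguments. Unset Strict Implicit. Unset Printing Implicit Defensive.
Import Order.TTheory GRing.Theory Num.Theory.
Local Open Scope classical_set_scope.
Local Open Scope ring_scope.

Definition cmod (R : realType) (z : R[i]) : R := ComplexField.Normc.normc z.

Definition ext_seminorm (R : realType) (K : numFieldType) (nK : K -> R)
    (X : lmodType K) (rho : X -> \bar R) : Prop :=
  (forall x, (0 <= rho x)%E) /\
  (forall (a : K) (x : X), rho (a *: x) = ((nK a)%:E * rho x)%E) /\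
  (forall x y : X, (rho (x + y)%R <= rho x + rho y)%E).

Definition seminorm (R : realType) (K : numFieldType) (nK : K -> R)
    (X : lmodType K) (q : X -> R) : Prop :=
  (forall (a : K) (x : X), q (a *: x) = nK a * q x) /\
  (forall x y : X, q (x + y) <= q x + q y).

(* topologies are represented by their families of open sets *)
Definition induced_topology (R : realType) (K : numFieldType) (X : lmodType K)
    (I : Type) (p : I -> X -> \bar R) : set (set X) :=
  [set U | forall x0, U x0 ->
     exists J : set I, finite_set J /\
     exists eps : R, 0 < eps /\
       [set x | forall i, J i -> (p i (x - x0)%R < eps%:E)%E] `<=` U].

Definition locally_convex_topology (R : realType) (K : numFieldType)
    (nK : K -> R) (X : lmodType K) (sigma : set (set X)) : Prop :=
  exists (I : Type) (q : I -> X -> R),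
    (forall i, seminorm nK (q i)) /\
    sigma = induced_topology (fun i x => (q i x)%:E).

Definition finest_lc_topology (R : realType) (K : numFieldType) (nK : K -> R)
    (X : lmodType K) (tau tauF : set (set X)) : Prop :=
  locally_convex_topology nK tauF /\ tauF `<=` tau /\
  (forall sigma, locally_convex_topology nK sigma -> sigma `<=` tau ->
     sigma `<=` tauF).

Definition is_nbhd (T : Type) (tau : set (set T)) (x : T) (N : set T) : Prop :=
  exists U, tau U /\ U x /\ U `<=` N.

Definition hausdorff_top (T : Type) (tau : set (set T)) : Prop :=
  forall x y : T, x <> y -> exists U V, tau U /\ tau V /\ U x /\ V y /\
    U `&` V = set0.

Definition countable_nbhd_base (T : Type) (tau : set (set T)) (x : T) : Prop :=
  exists B : nat -> set T, (forall n, is_nbhd tau x (B n)) /\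
    (forall N, is_nbhd tau x N -> exists n, B n `<=` N).

Definition is_metric (R : realType) (T : Type) (d : T -> T -> R) : Prop :=
  (forall x y, 0 <= d x y) /\ (forall x y, d x y = 0 <-> x = y) /\
  (forall x y, d x y = d y x) /\ (forall x y z, d x z <= d x y + d y z).

Definition metric_topology (R : realType) (T : Type) (d : T -> T -> R)
    : set (set T) :=
  [set U | forall x, U x -> exists r : R, 0 < r /\ [set y | d x y < r] `<=` U].

Definition metrizable_top (R : realType) (T : Type) (tau : set (set T)) : Prop :=
  exists d : T -> T -> R, is_metric d /\ metric_topology d = tau.

(* rho : (X, tau) -> [0, +oo] is continuous ([0,+oo] with its usual topology
   as a subspace of the extended reals) *)
Definition continuous_ext (R : realType) (T : Type) (tau : set (set T))
    (rho : T -> \bar R) : Prop :=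
  forall x0 (V : set (\bar R)), nbhs (rho x0) V -> is_nbhd tau x0 (rho @^-1` V).

(* X / X^rho_fin is finite dimensional: finitely many vectors whose classes
   span the quotient, X^rho_fin = {x | rho x < +oo} *)
Definition X_fin (R : realType) (K : numFieldType) (X : lmodType K)
    (rho : X -> \bar R) : set X := [set x | (rho x < +oo)%E].

Definition finite_dim_quotient (R : realType) (K : numFieldType)
    (X : lmodType K) (rho : X -> \bar R) : Prop :=
  exists (n : nat) (v : 'I_n -> X), forall x : X,
    exists c : 'I_n -> K, X_fin rho (x - \sum_(i < n) c i *: v i).

(* Main.v *)
Require Import Defs.
From mathcomp Require Import all_boot all_order all_algebra.
From mathcomp Require Import all_classical all_reals all_analysis.
From mathcomp Require Import complex finmap.
From mathcomp Require Import lra ring.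
Import Order.TTheory GRing.Theory Num.Theory.
Import numFieldNormedType.Exports.
Local Open Scope classical_set_scope.
Local Open Scope ring_scope.
Set Implicit Arguments. Unset Strict Implicit. Unset Printing Implicit Defensive.

Lemma seq_bound (R : realDomainType) (s : seq R) :
  exists M : R, forall x, x \in s -> x <= M.
Proof.
elim: s => [|a s [M HM]]; first by exists 0.
exists (Num.max a M) => x; rewrite inE => /orP[/eqP->|/HM xM].
  by rewrite le_max lexx.
by rewrite le_max xM orbT.
Qed.

Lemma finite_bound (R : realType) (I : Type) (J : set I) (f : I -> R) :
  finite_set J -> exists M, forall j, J j -> f j <= M.
Proof.
move=> /(finite_image f) /finite_fsetP [Y HY].
have [M HM] := seq_bound (enum_fset Y).
exists M => j Jj; apply: HM.
have : [set` Y] (f j) by rewrite -HY; exists j.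
done.
Qed.

Lemma finite_bound_nat (I : Type) (J : set I) (f : I -> nat) :
  finite_set J -> exists N, forall j, J j -> (f j <= N)%N.
Proof.
move=> /(finite_image f) /finite_fsetP [Y HY].
exists (\max_(x <- enum_fset Y) x)%N => j Jj.
have : [set` Y] (f j) by rewrite -HY; exists j.
move=> /= fY; exact: (@leq_bigmax_seq _ _ xpredT id _ fY).
Qed.

Lemma aux_zmod (V : zmodType) (x a A B : V) : x - (A - B) = x - (a + A) + (a + B).
Proof.
rewrite [RHS]addrC [RHS]addrA -[(a + B) + x]addrA [a + (B + x)]addrC addrKA.
by rewrite opprB addrA (addrC B).
Qed.

Section Gen.
Variables (R : realType) (K : numFieldType) (nK : K -> R).
Hypothesis nK0 : nK 0 = 0.
Hypothesis nK_ge0 : forall a, 0 <= nK a.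
Hypothesis nK_eq0 : forall a, nK a = 0 -> a = 0.
Hypothesis nKM : forall a b, nK (a * b) = nK a * nK b.
Hypothesis nKD : forall a b, nK (a + b) <= nK a + nK b.
Hypothesis nK1 : nK 1 = 1.
Hypothesis nKN1 : nK (-1) = 1.
Hypothesis nK_emb : forall r : R, 0 < r -> exists a, nK a = r.
Variable X : lmodType K.

Section ExtSemi.
Variable rho : X -> \bar R.
Hypothesis Hrho : ext_seminorm nK rho.

Lemma es_ge0 x : (0 <= rho x)%E. Proof. by case: Hrho. Qed.
Lemma esZ a x : rho (a *: x) = ((nK a)%:E * rho x)%E.
Proof. by case: Hrho => _ []. Qed.
Lemma esD x y : (rho (x + y) <= rho x + rho y)%E.
Proof. by case: Hrho => _ []. Qed.
Lemma es0 : rho 0 = 0%E.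
Proof. by rewrite -(scale0r (0 : X)) esZ nK0 mul0e. Qed.
Lemma esN x : rho (- x) = rho x.
Proof. by rewrite -scaleN1r esZ nKN1 mul1e. Qed.
Lemma esB x y : rho (x - y) = rho (y - x).
Proof. by rewrite -esN opprB. Qed.
Lemma es_tri x y z : (rho (x - z) <= rho (x - y) + rho (y - z))%E.
Proof. by rewrite (_ : x - z = (x - y) + (y - z)) ?esD // addrA subrK. Qed.

Definition Sfin := X_fin rho.
Lemma Sfin0 : Sfin 0. Proof. by rewrite /Sfin /X_fin /= es0. Qed.
Lemma SfinD x y : Sfin x -> Sfin y -> Sfin (x + y).
Proof.
rewrite /Sfin /X_fin /= => hx hy; apply: (le_lt_trans (esD x y)).
by apply: lte_add_pinfty.
Qed.
Lemma SfinZ a x : Sfin x -> Sfin (a *: x).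
Proof.
rewrite /Sfin /X_fin /= esZ => hx.
have hf : rho x \is a fin_num by rewrite ge0_fin_numE // es_ge0.
by rewrite -(fineK hf) -EFinM ltry.
Qed.
Lemma SfinN x : Sfin x -> Sfin (- x).
Proof. by rewrite /Sfin /X_fin /= esN. Qed.
Lemma SfinB x y : Sfin x -> Sfin y -> Sfin (x - y).
Proof. by move=> hx hy; apply: SfinD => //; apply: SfinN. Qed.
Lemma Sfin_sum n (c : 'I_n -> K) (v : 'I_n -> X) :
  (forall i, Sfin (v i)) -> Sfin (\sum_(i < n) c i *: v i).
Proof.
move=> hv; elim/big_ind: _ => //; [exact: Sfin0|exact: SfinD|].
by move=> i _; apply: SfinZ.
Qed.
Lemma Sfin_fin x : Sfin x -> rho x = (fine (rho x))%:E.
Proof.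
move=> hx; rewrite fineK // ge0_fin_numE //; exact: es_ge0.
Qed.
End ExtSemi.

Section Semi.
Variable q : X -> R.
Hypothesis Hq : seminorm nK q.
Lemma snZ a x : q (a *: x) = nK a * q x. Proof. by case: Hq. Qed.
Lemma snD x y : q (x + y) <= q x + q y. Proof. by case: Hq. Qed.
Lemma sn0 : q 0 = 0.
Proof. by rewrite -(scale0r (0 : X)) snZ nK0 mul0r. Qed.
Lemma snN x : q (- x) = q x.
Proof. by rewrite -scaleN1r snZ nKN1 mul1r. Qed.
Lemma snB x y : q (x - y) = q (y - x).
Proof. by rewrite -snN opprB. Qed.
Lemma sn_ge0 x : 0 <= q x.
Proof.
have := snD x (- x); rewrite subrr sn0 snN => h; lra.
Qed.
Lemma sn_sum n (f : 'I_n -> X) : q (\sum_(i < n) f i) <= \sum_(i < n) q (f i).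
Proof.
apply: (big_ind2 (fun a b => q a <= b)); first by rewrite sn0.
  by move=> a1 a2 b1 b2 h1 h2; apply: (le_trans (snD _ _)); exact: lerD.
by [].
Qed.
Lemma sn_es : ext_seminorm nK (fun x => (q x)%:E).
Proof.
split; first by move=> x; rewrite lee_fin sn_ge0.
split; first by move=> a x; rewrite snZ EFinM.
by move=> x y; rewrite -EFinD lee_fin snD.
Qed.
End Semi.

Section Topo.
Variables (I : Type) (p : I -> X -> \bar R).
Hypothesis Hp : forall i, ext_seminorm nK (p i).

Definition basic (x0 : X) (J : set I) (eps : R) :=
  [set x | forall i, J i -> (p i (x - x0) < eps%:E)%E].

Definition nbbasic (x0 : X) (A : set X) :=
  exists J : set I, finite_set J /\ exists eps : R, 0 < eps /\
    [set x | forall i, J i -> (p i (x - x0) < eps%:E)%E] `<=` A.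

Lemma nbbasicI x0 A B : nbbasic x0 A -> nbbasic x0 B -> nbbasic x0 (A `&` B).
Proof.
move=> [J1 [f1 [e1 [e10 h1]]]] [J2 [f2 [e2 [e20 h2]]]].
exists (J1 `|` J2); split; first by rewrite finite_setU.
exists (Num.min e1 e2); split; first by rewrite lt_min e10 e20.
move=> x hx; split.
  apply: h1 => i Ji; apply: (lt_le_trans (hx i (or_introl Ji))).
  by rewrite lee_fin ge_min lexx.
apply: h2 => i Ji; apply: (lt_le_trans (hx i (or_intror Ji))).
by rewrite lee_fin ge_min lexx orbT.
Qed.

Lemma nbbasicS x0 A B : A `<=` B -> nbbasic x0 A -> nbbasic x0 B.
Proof.
by move=> AB [J [f [e [e0 h]]]]; exists J; split => //; exists e; split => //; apply: subset_trans AB.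
Qed.

Lemma nbbasic_finI x0 (N : nat) (A : nat -> set X) :
  (forall n, (n < N)%N -> nbbasic x0 (A n)) ->
  nbbasic x0 [set x | forall n, (n < N)%N -> A n x].
Proof.
elim: N => [|N IH] h.
  by exists set0; split => //; exists 1; split => //.
have h1 : nbbasic x0 [set x | forall n, (n < N)%N -> A n x].
  by apply: IH => n nN; apply: h; apply: ltnW.
have := nbbasicI h1 (h N (ltnSn N)).
apply: nbbasicS => x [hx hN] n; rewrite ltnS leq_eqVlt => /orP[/eqP ->//|].
exact: hx.
Qed.

Lemma open_nbbasic U x0 : induced_topology p U -> U x0 -> nbbasic x0 U.
Proof. by move=> hU Ux0; apply: hU. Qed.

Definition dominated (rho : X -> \bar R) :=
  exists J C, finite_set J /\ 0 < C /\ forall y eta, 0 < eta ->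
    (forall i, J i -> (p i y < eta%:E)%E) -> (rho y <= (C * eta)%:E)%E.

Variable rho : X -> \bar R.
Hypothesis Hrho : ext_seminorm nK rho.
Hypothesis Hdom : dominated rho.

Lemma dom_basic x0 r : 0 < r -> nbbasic x0 [set x | (rho (x - x0) < r%:E)%E].
Proof.
move=> r0; case: Hdom => J [C [fJ [C0 hC]]].
exists J; split => //; exists (r / (2 * C)); split; first by rewrite divr_gt0 // mulr_gt0.
move=> x hx /=; apply: (le_lt_trans (hC _ _ _ hx)).
  by rewrite divr_gt0 // mulr_gt0.
rewrite lte_fin.
have -> : C * (r / (2 * C)) = r / 2 by field; rewrite gt_eqF.
lra.
Qed.

Lemma dom_ball_open x0 r : 0 < r ->
  induced_topology p [set x | (rho (x - x0) < r%:E)%E].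
Proof.
move=> r0 x1 /= h1.
have S1 : Sfin rho (x1 - x0) by rewrite /Sfin /X_fin /=; apply: (lt_trans h1); exact: ltry.
move: h1; rewrite (Sfin_fin Hrho S1) lte_fin; set a := fine _ => ha.
have := @dom_basic x1 (r - a) ; rewrite subr_gt0 => /(_ ha).
apply: nbbasicS => x /= hx.
apply: (le_lt_trans (es_tri Hrho x x1 x0)).
rewrite (Sfin_fin Hrho S1) -/a.
have -> : r%:E = ((r - a)%:E + a%:E)%E by rewrite -EFinD subrK.
by rewrite lteD2rE.
Qed.

Lemma dom_cont : continuous_ext (induced_topology p) rho.
Proof.
move=> x0 V.
case E : (rho x0) => [r| |].
- move=> hV; have : \forall y \near r, V y%:E by exact/nbhs_EFin.
  move=> /nbhs_ballP [d d0 hd].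
  exists [set x | (rho (x - x0) < d%:E)%E]; split; first exact: dom_ball_open.
  split; first by rewrite /= subrr es0 // lte_fin.
  move=> x /= hx.
  have Sx : Sfin rho (x - x0) by rewrite /Sfin /X_fin /=; apply: (lt_trans hx); exact: ltry.
  have h1 := esD Hrho x0 (x - x0); rewrite addrC subrK E in h1.
  have h2 := esD Hrho x (x0 - x); rewrite addrC subrK E esB // in h2.
  rewrite (Sfin_fin Hrho Sx) in h1 h2 hx.
  have Sxx : Sfin rho x.
    rewrite /Sfin /X_fin /=; apply: (le_lt_trans h1); exact: ltry.
  rewrite (Sfin_fin Hrho Sxx) in h1 h2 *.
  apply: hd; rewrite /ball /=.
  rewrite -EFinD !lee_fin lte_fin in h1 h2 hx.
  rewrite ltr_norml; apply/andP; split; lra.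
- move=> [M [_ hM]].
  exists [set x | (rho (x - x0) < 1%:E)%E]; split; first exact: dom_ball_open.
  split; first by rewrite /= subrr es0 // lte_fin.
  move=> x /= hx; apply: hM.
  have Sx : Sfin rho (x - x0) by rewrite /Sfin /X_fin /=; apply: (lt_trans hx); exact: ltry.
  have h2 := esD Hrho x (x0 - x); rewrite addrC subrK E esB // in h2.
  rewrite (Sfin_fin Hrho Sx) in h2.
  case Ex : (rho x) h2 => [s| |] //=.
  have := es_ge0 Hrho x; rewrite Ex //.
  by move=> _ _; rewrite ltry.
- by have := es_ge0 Hrho x0; rewrite E.
Qed.

Definition supn (J : set I) (eps : R) (x : X) : \bar R :=
  ereal_sup ([set 0%E] `|` [set ((eps^-1)%:E * p i x)%E | i in J]).

Lemma supn_ub J eps x i : J i -> ((eps^-1)%:E * p i x <= supn J eps x)%E.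
Proof. by move=> Ji; apply: ereal_sup_ubound; right; exists i. Qed.

Lemma supn_ge0 J eps x : (0 <= supn J eps x)%E.
Proof. by apply: ereal_sup_ubound; left. Qed.

Lemma supn_es J eps : 0 < eps -> ext_seminorm nK (supn J eps).
Proof.
move=> e0; split; first exact: supn_ge0.
split.
  move=> a x; rewrite /supn -ereal_supZl //; last first.
    by apply/set0P; exists 0%E; left.
  congr ereal_sup; apply/seteqP; split => y.
    case=> [->|[i Ji <-]]; first by exists 0%E; [left|rewrite mule0].
    exists ((eps^-1)%:E * p i x)%E; first by right; exists i.
    by rewrite esZ // muleCA.
  case=> z [->|[i Ji <-]] <-; first by left; rewrite mule0.
  by right; exists i => //; rewrite esZ // muleCA.
move=> x y; apply: ge_ereal_sup => z [->|[i Ji <-]].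
  by apply: adde_ge0; exact: supn_ge0.
have h1 : ((eps^-1)%:E * p i (x + y) <= (eps^-1)%:E * (p i x + p i y))%E.
  apply: lee_wpmul2l; first by rewrite lee_fin invr_ge0 ltW.
  exact: esD.
apply: (le_trans h1).
rewrite ge0_muleDr; try exact: es_ge0.
by apply: leeD; apply: supn_ub.
Qed.

Lemma supn_dom J eps : 0 < eps -> finite_set J -> dominated (supn J eps).
Proof.
move=> e0 fJ; exists J, eps^-1; split => //; split; first by rewrite invr_gt0.
move=> y eta eta0 hy; apply: ge_ereal_sup => z [->|[i Ji <-]].
  by rewrite lee_fin mulr_ge0 // ?invr_ge0 ltW.
rewrite EFinM; apply: lee_wpmul2l; first by rewrite lee_fin invr_ge0 ltW.
exact/ltW/hy.
Qed.

Lemma supn_lt1 J eps x : 0 < eps -> (supn J eps x < 1%:E)%E ->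
  forall i, J i -> (p i x < eps%:E)%E.
Proof.
move=> e0 hx i Ji; have := le_lt_trans (@supn_ub J eps x i Ji) hx.
case E : (p i x) => [r| |] //=.
  have ei : 0 < eps^-1 by rewrite invr_gt0.
  by rewrite -EFinM !lte_fin => h; rewrite -(ltr_pM2l ei) mulVf ?gt_eqF.
  by rewrite mulry gtr0_sg ?invr_gt0 // mul1e.
by move=> _; rewrite ltNyr.
Qed.
End Topo.

Section Quot.
Variable rho : X -> \bar R.
Hypothesis Hrho : ext_seminorm nK rho.
Variables (m : nat) (v : 'I_m -> X).
Hypothesis hind : forall c : 'I_m -> K,
  Sfin rho (\sum_(i < m) c i *: v i) -> forall i, c i = 0.
Hypothesis hspan : forall x, exists c : 'I_m -> K,
  Sfin rho (x - \sum_(i < m) c i *: v i).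

Definition coef x : 'I_m -> K := proj1_sig (cid (hspan x)).
Lemma coefP x : Sfin rho (x - \sum_(i < m) coef x i *: v i).
Proof. exact: (proj2_sig (cid (hspan x))). Qed.

Lemma coef_uniq x c : Sfin rho (x - \sum_(i < m) c i *: v i) ->
  forall i, coef x i = c i.
Proof.
move=> hc i; apply/eqP; rewrite -subr_eq0; apply/eqP; move: i.
apply: hind.
have -> : \sum_(i < m) (coef x i - c i) *: v i =
   (x - \sum_(i < m) c i *: v i) - (x - \sum_(i < m) coef x i *: v i).
  rewrite opprB addrC -addrA addKr.
  by rewrite -sumrB; apply: eq_bigr => i _; rewrite scalerBl.
by apply: SfinB => //; exact: coefP.
Qed.

Lemma coefD x y i : coef (x + y) i = coef x i + coef y i.
Proof.
apply: (coef_uniq (c := fun i => coef x i + coef y i)).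
have -> : x + y - \sum_(i < m) (coef x i + coef y i) *: v i =
  (x - \sum_(i < m) coef x i *: v i) + (y - \sum_(i < m) coef y i *: v i).
  rewrite (eq_bigr (fun i => coef x i *: v i + coef y i *: v i)); last first.
    by move=> j _; rewrite scalerDl.
  rewrite big_split /= opprD addrACA //.
by apply: SfinD => //; exact: coefP.
Qed.

Lemma coefZ a x i : coef (a *: x) i = a * coef x i.
Proof.
apply: (coef_uniq (c := fun i => a * coef x i)).
have -> : a *: x - \sum_(i < m) (a * coef x i) *: v i =
  a *: (x - \sum_(i < m) coef x i *: v i).
  rewrite scalerBr scaler_sumr; congr (_ - _); apply: eq_bigr => j _.
  by rewrite scalerA.
by apply: SfinZ => //; exact: coefP.
Qed.

Lemma coef0 x : Sfin rho x -> forall i, coef x i = 0.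
Proof.
move=> hx; apply: coef_uniq.
by rewrite big1 ?subr0 // => j _; rewrite scale0r.
Qed.

Definition qf x := fine (rho (x - \sum_(i < m) coef x i *: v i)) +
  \sum_(i < m) nK (coef x i).

Lemma fine_ge0' z : 0 <= fine (rho z).
Proof. by apply: fine_ge0; exact: es_ge0. Qed.

Lemma qf_seminorm : seminorm nK qf.
Proof.
split.
  move=> a x; rewrite /qf.
  have -> : a *: x - \sum_(i < m) coef (a *: x) i *: v i =
     a *: (x - \sum_(i < m) coef x i *: v i).
    rewrite scalerBr scaler_sumr; congr (_ - _); apply: eq_bigr => j _.
    by rewrite coefZ scalerA.
  rewrite esZ // mulrDr; congr (_ + _).
    by rewrite (Sfin_fin Hrho (coefP x)) -EFinM.
  by rewrite mulr_sumr; apply: eq_bigr => j _; rewrite coefZ nKM.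
move=> x y; rewrite /qf.
have -> : x + y - \sum_(i < m) coef (x + y) i *: v i =
  (x - \sum_(i < m) coef x i *: v i) + (y - \sum_(i < m) coef y i *: v i).
  rewrite (eq_bigr (fun i => coef x i *: v i + coef y i *: v i)); last first.
    by move=> j _; rewrite coefD scalerDl.
  rewrite big_split /= opprD addrACA //.
have h1 : fine (rho ((x - \sum_(i < m) coef x i *: v i) +
     (y - \sum_(i < m) coef y i *: v i))) <=
   fine (rho (x - \sum_(i < m) coef x i *: v i)) +
   fine (rho (y - \sum_(i < m) coef y i *: v i)).
  have := esD Hrho (x - \sum_(i < m) coef x i *: v i)
     (y - \sum_(i < m) coef y i *: v i).
  rewrite (Sfin_fin Hrho (SfinD Hrho (coefP x) (coefP y))).
  rewrite (Sfin_fin Hrho (coefP x)) (Sfin_fin Hrho (coefP y)).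
  by rewrite -EFinD lee_fin.
have h2 : \sum_(i < m) nK (coef (x + y) i) <=
   \sum_(i < m) nK (coef x i) + \sum_(i < m) nK (coef y i).
  rewrite -big_split /=; apply: ler_sum => j _; rewrite coefD; exact: nKD.
apply: le_trans (lerD h1 h2) _.
by rewrite addrACA.
Qed.

Lemma qf_le x : ((qf x)%:E <= rho x)%E.
Proof.
case: (pselect (Sfin rho x)) => hx; last first.
  have : ~ (rho x < +oo)%E by exact: hx.
  by move/negP; rewrite -leNgt leye_eq => /eqP ->; rewrite leey.
rewrite /qf big1; last by move=> j _; rewrite coef0 // scale0r.
rewrite subr0 big1; last by move=> j _; rewrite coef0.
by rewrite addr0 -Sfin_fin.
Qed.

Lemma qf_pos x : qf x = 0 -> rho x = 0%E.
Proof.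
rewrite /qf => h.
have hs : 0 <= \sum_(i < m) nK (coef x i) by apply: sumr_ge0 => j _.
have hf := fine_ge0' (x - \sum_(i < m) coef x i *: v i).
have hs0 : \sum_(i < m) nK (coef x i) = 0 by lra.
have hc : forall i, coef x i = 0.
  move=> i; apply: nK_eq0; apply/eqP.
  by move/eqP: hs0; rewrite psumr_eq0 // => /allP /(_ i (mem_index_enum _)) /implyP; apply.
have hf0 : fine (rho (x - \sum_(i < m) coef x i *: v i)) = 0 by lra.
move: hf0; rewrite big1 ?subr0; last by move=> j _; rewrite hc scale0r.
move=> hf0.
have hx : Sfin rho x.
  have := coefP x; rewrite big1 ?subr0 //; move=> j _; rewrite hc scale0r //.
by rewrite (Sfin_fin Hrho hx) hf0.
Qed.

Lemma qf_dom (r : X -> R) C : seminorm nK r -> 0 <= C ->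
  (forall x, ((r x)%:E <= C%:E * rho x)%E) ->
  exists D, 0 <= D /\ forall x, r x <= D * qf x.
Proof.
move=> hr C0 hC.
pose M := \sum_(i < m) r (v i).
have M0 : 0 <= M by apply: sumr_ge0 => j _; exact: sn_ge0.
exists (C + M); split; first by rewrite addr_ge0.
move=> x.
set z := x - \sum_(i < m) coef x i *: v i.
have h1 : r x <= r z + \sum_(i < m) nK (coef x i) * r (v i).
  have hx : x = z + \sum_(i < m) coef x i *: v i by rewrite /z subrK.
  rewrite {1}hx.
  apply: (le_trans (snD hr _ _)); rewrite lerD2l.
  apply: (le_trans (sn_sum hr _)); apply: ler_sum => j _.
  by rewrite snZ.
have h2 : r z <= C * fine (rho z).
  have := hC z; rewrite (Sfin_fin Hrho (coefP x)) -EFinM lee_fin //.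
have h3 : \sum_(i < m) nK (coef x i) * r (v i) <= M * \sum_(i < m) nK (coef x i).
  rewrite mulr_sumr; apply: ler_sum => j _; rewrite mulrC; apply: ler_wpM2r => //.
  rewrite /M (bigD1 j) //= lerDl; apply: sumr_ge0 => k _; exact: sn_ge0.
have hf := fine_ge0' z.
have hs : 0 <= \sum_(i < m) nK (coef x i) by apply: sumr_ge0 => j _.
rewrite /qf -/z.
apply: (le_trans h1); rewrite mulrDr !mulrDl.
have : C * \sum_(i < m) nK (coef x i) >= 0 by rewrite mulr_ge0.
have : M * fine (rho z) >= 0 by rewrite mulr_ge0.
move: h2 h3; set a := r z; set b := \sum_(i < m) nK (coef x i) * r (v i).
move=> h2 h3 h4 h5; lra.
Qed.
End Quot.

Lemma extract rho : ext_seminorm nK rho -> finite_dim_quotient rho ->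
  exists m (v : 'I_m -> X),
    (forall c : 'I_m -> K, Sfin rho (\sum_(i < m) c i *: v i) -> forall i, c i = 0) /\
    (forall x, exists c : 'I_m -> K, Sfin rho (x - \sum_(i < m) c i *: v i)).
Proof.
move=> Hrho [n [v hv]]; elim: n v hv => [|n IH] v hv.
  by exists 0%N, v; split => // c _ [].
case: (pselect (forall c : 'I_n.+1 -> K,
   Sfin rho (\sum_(i < n.+1) c i *: v i) -> forall i, c i = 0)) => hind.
  by exists n.+1, v.
have [c [hc [j cj]]] : exists c : 'I_n.+1 -> K,
    Sfin rho (\sum_(i < n.+1) c i *: v i) /\ exists j, c j <> 0.
  apply: contrapT => hn; apply: hind => c hc i.
  apply: contrapT => ci; apply: hn; exists c; split => //; exists i.
  by [].
apply: (IH (fun i => v (lift j i))) => x.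
have [d hd] := hv x.
pose t := d j / c j.
exists (fun i => d (lift j i) - t * c (lift j i)).
have -> : x - \sum_(i < n) (d (lift j i) - t * c (lift j i)) *: v (lift j i) =
   (x - \sum_(i < n.+1) d i *: v i) + t *: \sum_(i < n.+1) c i *: v i.
  rewrite (bigD1_ord j) //= (bigD1_ord j) //= scalerDr scalerA.
  rewrite (_ : t * c j = d j); last by rewrite /t divfK //; apply/eqP.
  rewrite -(aux_zmod _ (d j *: v j)); congr (_ - _).
  rewrite scaler_sumr -sumrB; apply: eq_bigr => i _.
  by rewrite scalerBl scalerA.
by apply: SfinD => //; apply: SfinZ.
Qed.

Lemma ge_min_l (a b : R) : Num.min a b <= a. Proof. by rewrite ge_min lexx. Qed.
Lemma ge_min_r (a b : R) : Num.min a b <= b. Proof. by rewrite ge_min lexx orbT. Qed.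

Section Metric.
Variable Q : nat -> X -> R.
Hypothesis HQ : forall n, seminorm nK (Q n).
Hypothesis Qmono : forall n N x, (n <= N)%N -> Q n x <= Q N x.
Hypothesis Qsep : forall x, x <> 0 -> exists n, 0 < Q n x.

Definition dset x y := [set Num.min ((n.+1%:R)^-1) (Q n (x - y)) | n in [set: nat]].
Definition dQ x y := sup (dset x y).

Lemma dset_ne x y : dset x y !=set0.
Proof. by exists (Num.min 1^-1 (Q 0 (x - y))); exists 0%N. Qed.

Lemma dset_ub x y : has_ubound (dset x y).
Proof.
exists 1 => z [n _ <-]; apply: (le_trans (ge_min_l _ _)).
by rewrite invf_le1 // ler1n.
Qed.

Lemma dset_le x y n : Num.min ((n.+1%:R)^-1) (Q n (x - y)) <= dQ x y.
Proof. by apply: ub_le_sup; [exact: dset_ub|exists n]. Qed.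

Lemma dQ_le x y b : (forall n, Num.min ((n.+1%:R)^-1) (Q n (x - y)) <= b) -> dQ x y <= b.
Proof. by move=> h; apply: ge_sup; [exact: dset_ne|move=> z [n _ <-]]. Qed.

Lemma min_sub (a s t u : R) : 0 <= a -> 0 <= s -> 0 <= t -> u <= s + t ->
  Num.min a u <= Num.min a s + Num.min a t.
Proof.
move=> a0 s0 t0 ust.
case: (leP a s) => [as_|sa]; case: (leP a t) => [at_|ta].
- by rewrite ge_min; apply/orP; left; lra.
- by rewrite ge_min; apply/orP; left; lra.
- by rewrite ge_min; apply/orP; left; lra.
- by rewrite ge_min; apply/orP; right; lra.
Qed.

Lemma dQ_metric : is_metric dQ.
Proof.
have hinv n : 0 < (n.+1%:R : R)^-1 by rewrite invr_gt0.
split.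
  move=> x y; apply: le_trans (dset_le x y 0%N).
  by rewrite le_min (ltW (hinv 0%N)) sn_ge0.
split.
  move=> x y; split; last first.
    move=> ->; apply/eqP; rewrite eq_le; apply/andP; split.
      by apply: dQ_le => n; rewrite subrr sn0 // ge_min lexx orbT.
    by apply: le_trans (dset_le y y 0%N); rewrite subrr sn0 // le_min lexx ltW.
  move=> h; apply: contrapT => xy.
  have [n hn] : exists n, 0 < Q n (x - y).
    by apply: Qsep => /eqP; rewrite subr_eq0 => /eqP.
  have : 0 < dQ x y.
    by apply: lt_le_trans (dset_le x y n); rewrite lt_min hinv hn.
  by rewrite h ltxx.
split.
  by move=> x y; rewrite /dQ /dset; congr sup; apply/seteqP; split => z [n _ <-];
    exists n => //; rewrite snB.
move=> x y z; apply: dQ_le => n.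
apply: le_trans (lerD (dset_le x y n) (dset_le y z n)).
apply: min_sub; rewrite ?sn_ge0 ?(ltW (hinv n)) //.
by rewrite (_ : x - z = (x - y) + (y - z)) ?snD // addrA subrK.
Qed.

Lemma dQ_top : metric_topology dQ = induced_topology (fun n x => (Q n x)%:E).
Proof.
have hinv n : 0 < (n.+1%:R : R)^-1 by rewrite invr_gt0.
apply/seteqP; split => U hU x0 Ux0.
- have [r [r0 hr]] := hU x0 Ux0.
  have r20 : 0 < (r / 2)^-1 by rewrite invr_gt0 divr_gt0.
  pose N := Num.Def.archi_bound (r / 2)^-1.
  have hN : (N.+1%:R : R)^-1 < r / 2.
    rewrite -[X in _ < X]invrK ltf_pV2 ?posrE ?invr_gt0 ?divr_gt0 //.
    apply: lt_trans (archi_boundP (ltW r20)) _.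
    by rewrite ltr_nat.
  exists [set N]; split => //; exists (r / 2); split; first by rewrite divr_gt0.
  move=> y /= hy; apply: hr => /=.
  have hy' : Q N (y - x0) < r / 2 by move: (hy N erefl); rewrite lte_fin.
  apply: (@le_lt_trans _ _ (r / 2)); last by lra.
  apply: dQ_le => n; case: (leqP n N) => nN.
    apply: le_trans (ge_min_r _ _) _; rewrite snB //.
    exact: le_trans (Qmono _ nN) (ltW hy').
  apply: le_trans (ge_min_l _ _) _; apply: ltW; apply: le_lt_trans hN.
  by rewrite lef_pV2 ?posrE // ler_nat ltnW.
- have [J [fJ [e [e0 hJ]]]] := hU x0 Ux0.
  have [N hN] := finite_bound_nat id fJ.
  exists (Num.min e ((N.+1%:R)^-1)); split; first by rewrite lt_min e0 hinv.
  move=> y /= hy; apply: hJ => n Jn /=; rewrite lte_fin.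
  have nN := hN n Jn.
  have h1 := le_lt_trans (dset_le x0 y n) hy.
  have h2 : Num.min e ((N.+1%:R)^-1) <= (n.+1%:R)^-1.
    apply: le_trans (ge_min_r _ _) _.
    by rewrite lef_pV2 ?posrE // ler_nat.
  move: h1; rewrite snB //; case: (leP ((n.+1%:R)^-1) (Q n (y - x0))) => hq.
    by move=> h; move: (lt_le_trans h h2); rewrite ltxx.
  move=> h; apply: lt_le_trans h _.
  exact: ge_min_l.
Qed.
End Metric.

Lemma sn_ball_open (I' : Type) (r : I' -> X -> R) :
  (forall j, seminorm nK (r j)) -> forall j x0 e,
  induced_topology (fun j x => (r j x)%:E) [set x | r j (x - x0) < e].
Proof.
move=> hr j x0 e x1 /= h1.
exists [set j]; split => //; exists (e - r j (x1 - x0)); split; first by rewrite subr_gt0.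
move=> x /= /(_ j erefl); rewrite lte_fin => hx.
have := snD (hr j) (x - x1) (x1 - x0); rewrite addrA subrK => h; lra.
Qed.

Lemma dom_from_lt1 (r : X -> R) (rho : X -> \bar R) :
  seminorm nK r -> ext_seminorm nK rho ->
  (forall x, (rho x < 1%:E)%E -> r x < 1) -> forall x, ((r x)%:E <= rho x)%E.
Proof.
move=> hr hrho h x; case: (pselect (Sfin rho x)) => hx; last first.
  have : ~ (rho x < +oo)%E by exact: hx.
  by move/negP; rewrite -leNgt leye_eq => /eqP ->; rewrite leey.
rewrite (Sfin_fin hrho hx) lee_fin; set a := fine (rho x).
have a0 : 0 <= a by exact: fine_ge0 (es_ge0 hrho x).
apply/unstable.ler_gtP => s hs.
have s0 : 0 < s by lra.
have si : 0 < s^-1 by rewrite invr_gt0.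
have [b hb] := nK_emb si.
have := h (b *: x); rewrite esZ // (Sfin_fin hrho hx) -/a hb -EFinM lte_fin.
rewrite snZ // hb.
have -> : s^-1 * a = a / s by rewrite mulrC.
have -> : s^-1 * r x = r x / s by rewrite mulrC.
rewrite !ltr_pdivrMr // !mul1r => /(_ hs) /ltW //.
Qed.

Definition Qs (q : nat -> X -> R) N x := \sum_(n < N.+1) q n x.

Lemma Qs_semi q N : (forall n, seminorm nK (q n)) -> seminorm nK (Qs q N).
Proof.
move=> hq; split.
  by move=> a x; rewrite /Qs mulr_sumr; apply: eq_bigr => n _; rewrite snZ.
move=> x y; rewrite /Qs -big_split /=; apply: ler_sum => n _; exact: snD.
Qed.

Lemma Qs_mono q n N x : (forall n, seminorm nK (q n)) -> (n <= N)%N ->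
  Qs q n x <= Qs q N x.
Proof.
move=> hq; elim: N => [|N IH]; first by rewrite leqn0 => /eqP ->.
rewrite leq_eqVlt => /orP[/eqP -> //|]; rewrite ltnS => /IH h.
apply: (le_trans h); rewrite /Qs (big_ord_recr N.+1) /= lerDl; exact: sn_ge0.
Qed.

Lemma q_le_Qs q n x : (forall n, seminorm nK (q n)) -> q n x <= Qs q n x.
Proof.
move=> hq; rewrite /Qs big_ord_recr /= lerDr; apply: sumr_ge0 => i _; exact: sn_ge0.
Qed.

Lemma b_to_a (I : Type) (p : I -> X -> \bar R) :
  (forall i, ext_seminorm nK (p i)) ->
  hausdorff_top (induced_topology p) ->
  countable_nbhd_base (induced_topology p) 0 ->
  forall tauF, finest_lc_topology nK (induced_topology p) tauF ->
  (forall rho, ext_seminorm nK rho -> continuous_ext (induced_topology p) rho ->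
     finite_dim_quotient rho) ->
  metrizable_top R tauF.
Proof.
move=> Hp hH [B [hB1 hB2]] tauF [hlc [hFt hfin]] hb.
have hJ : forall n : nat, exists Je : set I * R, finite_set Je.1 /\ 0 < Je.2 /\
    [set x : X | forall i, Je.1 i -> (p i (x - 0)%R < Je.2%:E)%E] `<=` B n.
  move=> n; have [U [hU [U0 UB]]] := hB1 n.
  have [J [fJ [e [e0 hJ]]]] := hU 0 U0.
  by exists (J, e); split => //; split => //; apply: subset_trans UB.
have [Je hJe] := choice hJ.
pose rh n := supn p (Je n).1 (Je n).2.
have rh_es n : ext_seminorm nK (rh n).
  exact: (supn_es Hp (Je n).1 (proj1 (proj2 (hJe n)))).
have rh_dom n : dominated p (rh n).
  exact: (supn_dom p (proj1 (proj2 (hJe n))) (proj1 (hJe n))).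
have rh_cont n : continuous_ext (induced_topology p) (rh n).
  exact: (dom_cont (rh_es n) (rh_dom n)).
have rh_lt1 n x : (rh n x < 1%:E)%E -> B n x.
  move=> h; apply: (proj2 (proj2 (hJe n))) => i Ji; rewrite subr0.
  exact: (supn_lt1 (proj1 (proj2 (hJe n))) h Ji).
have hF : forall n, exists mv : {m : nat & 'I_m -> X},
   (forall c : 'I_(projT1 mv) -> K,
      Sfin (rh n) (\sum_(i < projT1 mv) c i *: projT2 mv i) -> forall i, c i = 0) /\
   (forall x, exists c : 'I_(projT1 mv) -> K,
      Sfin (rh n) (x - \sum_(i < projT1 mv) c i *: projT2 mv i)).
  move=> n; have [m [v [h1 h2]]] := extract (rh_es n) (hb _ (rh_es n) (rh_cont n)).
  by exists (existT _ m v).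
have [F hFp] := choice hF.
pose q n := qf (proj2 (hFp n)).
have hq n : seminorm nK (q n).
  exact: (qf_seminorm (rh_es n) (proj1 (hFp n)) (proj2 (hFp n))).
have hqle n x : ((q n x)%:E <= rh n x)%E.
  exact: (qf_le (rh_es n) (proj1 (hFp n)) (proj2 (hFp n)) x).
pose Q := Qs q.
have hQ N : seminorm nK (Q N) by exact: Qs_semi.
have Qmono n N x : (n <= N)%N -> Q n x <= Q N x by move=> h; exact: Qs_mono.
have Qsep x : x <> 0 -> exists n, 0 < Q n x.
  move=> hx; have [U [V [hU [hV [Ux [V0 UV]]]]]] := hH x 0 hx.
  have [n hn] : exists n, B n `<=` V.
    apply: hB2; exists V; split; [exact: hV|split; [exact: V0|by []]].
  exists n.
  have h1 : ~ (rh n x < 1%:E)%E.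
    move=> /rh_lt1 /hn Vx; have : (U `&` V) x by [].
    by rewrite UV.
  have h2 : q n x <> 0.
    move=> /(qf_pos (rh_es n)) h; apply: h1; rewrite h; exact: lte01.
  apply: (lt_le_trans _ (q_le_Qs n x hq)).
  by rewrite lt_neqAle eq_sym; apply/andP; split; [apply/eqP|exact: sn_ge0].
pose sigma := induced_topology (fun N x => (Q N x)%:E).
have hsig_lc : locally_convex_topology nK sigma by exists nat, Q.
have hsig_tau : sigma `<=` induced_topology p.
  move=> U hU x0 Ux0.
  have [Js [fJs [e [e0 hJs]]]] := hU x0 Ux0.
  have [N hN] := finite_bound_nat id fJs.
  pose e' := e / (2 * N.+1%:R).
  have e'0 : 0 < e' by rewrite divr_gt0 // mulr_gt0.
  have hA := @nbbasic_finI I p x0 N.+1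
     (fun n => [set x : X | (rh n (x - x0)%R < e'%:E)%E])
     (fun n _ => dom_basic (rh_dom n) x0 e'0).
  apply: nbbasicS hA => x hx; apply: hJs => n0 Jn0; rewrite lte_fin.
  apply: (le_lt_trans (Qmono _ _ _ (hN n0 Jn0))).
  have h1 : Q N (x - x0) <= \sum_(n < N.+1) e'.
    apply: ler_sum => n _.
    have := le_lt_trans (hqle n (x - x0)) (hx n (ltn_ord n)).
    by rewrite lte_fin => /ltW.
  have h2 : e' *+ N.+1 = e / 2.
    rewrite /e' -mulr_natr; field; by rewrite nat1r pnatr_eq0.
  apply: (le_lt_trans h1); rewrite sumr_const card_ord h2.
  lra.
have hsigF : sigma `<=` tauF by exact: hfin.
have [I' [r [hr hFeq]]] := hlc.
have hdom : forall j, exists nD : nat * R, 0 <= nD.2 /\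
    forall x, r j x <= nD.2 * Q nD.1 x.
  move=> j.
  have hop : tauF [set x | r j (x - 0) < 1] by rewrite hFeq; exact: sn_ball_open.
  have : is_nbhd (induced_topology p) 0 [set x | r j (x - 0) < 1].
    exists [set x | r j (x - 0) < 1]; split; first exact: hFt.
    by split => //=; rewrite subrr sn0.
  move=> /hB2 [n hn].
  have h1 x : (rh n x < 1%:E)%E -> r j x < 1.
    by move=> /rh_lt1 /hn /=; rewrite subr0.
  have h2 := dom_from_lt1 (hr j) (rh_es n) h1.
  have [D [D0 hD]] := qf_dom (rh_es n) (proj2 (hFp n)) (hr j) ler01
    (fun x => ltac:(rewrite mul1e; exact: h2 x)).
  exists (n, D); split => // x; apply: (le_trans (hD x)).
  by apply: ler_wpM2l => //; exact: q_le_Qs.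
have [nD hnD] := choice hdom.
have hFsig : tauF `<=` sigma.
  move=> U; rewrite hFeq => hU x0 Ux0.
  have [J' [fJ' [e [e0 hJ']]]] := hU x0 Ux0.
  have [N hN] := finite_bound_nat (fun j => (nD j).1) fJ'.
  have [M hM] := finite_bound (fun j => (nD j).2) fJ'.
  pose D := `|M| + 1.
  have D0 : 0 < D by rewrite /D ltr_pwDr.
  exists [set N]; split => //; exists (e / D); split; first by rewrite divr_gt0.
  move=> y /= hy; apply: hJ' => j Jj; rewrite lte_fin.
  have hy' : Q N (y - x0) < e / D by move: (hy N erefl); rewrite lte_fin.
  apply: (le_lt_trans (proj2 (hnD j) (y - x0))).
  have h1 : (nD j).2 * Q (nD j).1 (y - x0) <= D * Q N (y - x0).
    apply: ler_pM; [exact: (proj1 (hnD j))|exact: sn_ge0| |exact: (Qmono _ _ _ (hN j Jj))].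
    apply: (le_trans (hM j Jj)); rewrite /D; apply: (le_trans (ler_norm M)).
    by rewrite lerDl.
  apply: (le_lt_trans h1).
  by rewrite -(ltr_pM2l D0) in hy'; rewrite (lt_le_trans hy') // mulrC divfK ?gt_eqF.
have -> : tauF = sigma by apply/seteqP; split.
exists (dQ Q); split; first exact: dQ_metric.
exact: dQ_top.
Qed.

Section Ext.
Variable W : set X.
Hypothesis W0 : W 0.
Variable g0 : X -> K.

Record good (D : set X) (g : X -> K) : Prop := Good {
  gW : W `<=` D;
  gDD : forall x y, D x -> D y -> D (x + y);
  gDZ : forall a x, D x -> D (a *: x);
  glD : forall x y, D x -> D y -> g (x + y) = g x + g y;
  glZ : forall a x, D x -> g (a *: x) = a * g x;
  g0E : forall x, W x -> g x = g0 x }.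

Hypothesis good0 : good W g0.

Definition PF := {s : set X * (X -> K) | good s.1 s.2}.
Definition PFD (s : PF) := (sval s).1.
Definition PFg (s : PF) := (sval s).2.
Definition PFgood (s : PF) : good (PFD s) (PFg s) := svalP s.

Definition Rel : rel PF := fun s t =>
  `[< PFD s `<=` PFD t /\ forall x, PFD s x -> PFg t x = PFg s x >].

Lemma RelP s t : Rel s t <-> PFD s `<=` PFD t /\ forall x, PFD s x -> PFg t x = PFg s x.
Proof. by split => [/asboolP|h]; [|apply/asboolP]. Qed.

Lemma DB (s : PF) x y : PFD s x -> PFD s y -> PFD s (x - y).
Proof.
move=> hx hy; apply: (gDD (PFgood s)) => //.
by rewrite -scaleN1r; apply: (gDZ (PFgood s)).
Qed.

Lemma ext_exists : exists f : X -> K,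
  (forall x y, f (x + y) = f x + f y) /\ (forall a x, f (a *: x) = a * f x) /\
  (forall x, W x -> f x = g0 x).
Proof.
pose t0 : PF := exist _ (W, g0) good0.
have [|||t tmax] := @ZL_preorder PF t0 Rel.
- by move=> s; apply/RelP; split.
- move=> r s t /RelP [rs1 rs2] /RelP [st1 st2]; apply/RelP; split.
    exact: subset_trans st1.
  by move=> x hx; rewrite st2 ?rs2 //; apply: rs1.
- move=> A Atot.
  case: (pselect (exists s, A s)) => [[s0 As0]|hA]; last first.
    by exists t0 => s As; exfalso; apply: hA; exists s.
  pose Ds := fun x => exists s, A s /\ PFD s x.
  pose gs := fun x => match pselect (Ds x) with
     | left h => PFg (proj1_sig (cid h)) x | right _ => 0 end.
  have gsE s x : A s -> PFD s x -> gs x = PFg s x.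
    move=> As hx; rewrite /gs; case: pselect => [h|h]; last first.
      by exfalso; apply: h; exists s.
    case: (cid h) => s' [As' hs'] /=.
    have [/RelP [h1 h2]|/RelP [h1 h2]] := Atot s s' As As'.
      by rewrite h2.
    by rewrite h2.
  have up s s' : A s -> A s' -> exists u, [/\ A u, PFD s `<=` PFD u & PFD s' `<=` PFD u].
    move=> As As'; have [/RelP [h1 h2]|/RelP [h1 h2]] := Atot s s' As As'.
      by exists s'; split.
    by exists s; split.
  have goods : good Ds gs.
    split.
    + by move=> x Wx; exists s0; split => //; apply: (gW (PFgood s0)).
    + move=> x y [s [As hx]] [s' [As' hy]].
      have [u [Au h1 h2]] := up s s' As As'.
      by exists u; split => //; apply: (gDD (PFgood u)); [apply: h1|apply: h2].
    + move=> a x [s [As hx]]; exists s; split => //; exact: (gDZ (PFgood s)).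
    + move=> x y [s [As hx]] [s' [As' hy]].
      have [u [Au h1 h2]] := up s s' As As'.
      have hxu := h1 _ hx; have hyu := h2 _ hy.
      rewrite (gsE u) ?(gsE u x) ?(gsE u y) //; last exact: (gDD (PFgood u)).
      exact: (glD (PFgood u)).
    + move=> a x [s [As hx]].
      rewrite (gsE s) ?(gsE s x) //; last exact: (gDZ (PFgood s)).
      exact: (glZ (PFgood s)).
    + move=> x Wx; have hx := gW (PFgood s0) Wx.
      by rewrite (gsE s0) //; exact: (g0E (PFgood s0)).
  exists (exist _ (Ds, gs) goods) => s As; apply/RelP; split.
    by move=> x hx; exists s.
  by move=> x hx; rewrite /PFg /= (gsE s).
have hall : forall x, PFD t x.
  move=> x; apply: contrapT => hx.
  pose D' := fun z => exists (d : X) (a : K), PFD t d /\ z = d + a *: x.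
  have uniq d a d' a' : PFD t d -> PFD t d' -> d + a *: x = d' + a' *: x ->
      a = a' /\ d = d'.
    move=> hd hd' e.
    have ea : a = a'.
      apply: contrapT => na; apply: hx.
      have : (a - a') *: x = d' - d.
        rewrite scalerBl; apply/eqP; rewrite subr_eq addrAC -e addrC addKr eqxx //.
      move=> /(congr1 (fun z => (a - a')^-1 *: z)); rewrite scalerA mulVf ?scale1r.
        by move=> ->; apply: (gDZ (PFgood t)); exact: DB.
      by rewrite subr_eq0; apply/eqP.
    by split => //; move: e; rewrite ea => /addIr.
  pose g' := fun z => match pselect (D' z) with
     | left h => PFg t (proj1_sig (cid h)) | right _ => 0 end.
  have g'E d a : PFD t d -> g' (d + a *: x) = PFg t d.
    move=> hd; rewrite /g'; case: pselect => [h|h]; last first.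
      by exfalso; apply: h; exists d, a.
    case: (cid h) => d' [a' [hd' e]] /=.
    by have [_ ->] := uniq d a d' a' hd hd' e.
  have hD'D z : PFD t z -> D' z by move=> hz; exists z, 0; rewrite scale0r addr0.
  have goods' : good D' g'.
    split.
    + by move=> z Wz; apply: hD'D; exact: (gW (PFgood t)).
    + move=> z z' [d [a [hd ->]]] [d' [a' [hd' ->]]].
      exists (d + d'), (a + a'); split; first exact: (gDD (PFgood t)).
      by rewrite scalerDl addrACA.
    + move=> b z [d [a [hd ->]]]; exists (b *: d), (b * a); split.
        exact: (gDZ (PFgood t)).
      by rewrite scalerDr scalerA.
    + move=> z z' [d [a [hd ->]]] [d' [a' [hd' ->]]].
      have -> : d + a *: x + (d' + a' *: x) = (d + d') + (a + a') *: x.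
        by rewrite scalerDl addrACA.
      rewrite !g'E //; [exact: (glD (PFgood t))|exact: (gDD (PFgood t))].
    + move=> b z [d [a [hd ->]]].
      have -> : b *: (d + a *: x) = b *: d + (b * a) *: x by rewrite scalerDr scalerA.
      rewrite !g'E //; [exact: (glZ (PFgood t))|exact: (gDZ (PFgood t))].
    + move=> z Wz; have hz := gW (PFgood t) Wz.
      have -> : z = z + 0 *: x by rewrite scale0r addr0.
      rewrite g'E // scale0r addr0; exact: (g0E (PFgood t)).
  pose s' : PF := exist _ (D', g') goods'.
  have : Rel t s'.
    apply/RelP; split; first exact: hD'D.
    move=> z hz; rewrite /PFg /=.
    have -> : z = z + 0 *: x by rewrite scale0r addr0.
    by rewrite g'E // scale0r addr0.
  move=> /tmax /RelP [h1 _]; apply: hx; apply: h1.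
  by exists 0, 1; rewrite scale1r add0r; split => //; exact: (gW (PFgood t)).
exists (PFg t); split.
  by move=> x y; apply: (glD (PFgood t)); apply: hall.
split; first by move=> a x; apply: (glZ (PFgood t)); apply: hall.
exact: (g0E (PFgood t)).
Qed.
End Ext.

Lemma pad_sum (V : zmodType) (F : nat -> V) N M : (N <= M)%N ->
  \sum_(k < N) F k = \sum_(k < M) (if (k < N)%N then F k else 0).
Proof. by move=> NM; rewrite (big_ord_widen M F NM) big_mkcond. Qed.

Section Seq.
Variable rho : X -> \bar R.
Hypothesis Hrho : ext_seminorm nK rho.

Lemma build_seq (P : nat -> X -> Prop) :
  (forall (f : nat -> X) n, exists z, P n z /\
     forall c : 'I_n -> K, ~ Sfin rho (z - \sum_(i < n) c i *: f i)) ->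
  exists y : nat -> X, forall n, P n (y n) /\
     forall c : 'I_n -> K, ~ Sfin rho (y n - \sum_(i < n) c i *: y i).
Proof.
move=> hex.
have hex' : forall fn : (nat -> X) * nat, exists z, P fn.2 z /\
   forall c : 'I_fn.2 -> K, ~ Sfin rho (z - \sum_(i < fn.2) c i *: fn.1 i).
  by move=> [f n]; exact: hex.
have [nx hnx] := choice hex'.
pose ys := fix ys n := match n with
  | 0 => fun _ : nat => 0 : X
  | n'.+1 => fun k => if k == n' then nx (ys n', n') else ys n' k end.
pose y n := nx (ys n, n).
have ysE : forall n k, (k < n)%N -> ys n k = y k.
  elim=> [//|n IH] k; rewrite ltnS leq_eqVlt => /orP[/eqP ->|kn] /=.
    by rewrite eqxx.
  by rewrite ifN ?IH // neq_ltn kn.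
exists y => n; have [h1 h2] := hnx (ys n, n); split => // c.
have -> : \sum_(i < n) c i *: y i = \sum_(i < n) c i *: ys n i.
  by apply: eq_bigr => i _; rewrite ysE.
exact: h2.
Qed.

Variable y : nat -> X.
Hypothesis hy : forall n (c : 'I_n -> K), ~ Sfin rho (y n - \sum_(i < n) c i *: y i).

Lemma indep_seq N (a : nat -> K) : Sfin rho (\sum_(k < N) a k *: y k) ->
  forall k, (k < N)%N -> a k = 0.
Proof.
elim: N a => [//|N IH] a h k kN.
rewrite big_ord_recr /= in h.
have aN : a N = 0.
  apply: contrapT => aN; apply: (hy (n := N) (c := fun i => - a i / a N)).
  have -> : y N - \sum_(i < N) (- a i / a N) *: y i =
      (a N)^-1 *: (\sum_(i < N) a i *: y i + a N *: y N).
    rewrite scalerDr scalerA mulVf; last by apply/eqP.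
    rewrite scale1r addrC; congr (_ + _).
    rewrite scaler_sumr -sumrN; apply: eq_bigr => i _.
    by rewrite scalerA -scaleNr mulNr opprK mulrC.
  exact: SfinZ.
move: kN; rewrite ltnS leq_eqVlt => /orP[/eqP ->//|kN].
apply: IH kN; move: h; rewrite aN scale0r addr0 //.
Qed.

Lemma rep_eq x N (a : nat -> K) N' (b : nat -> K) :
  Sfin rho (x - \sum_(k < N) a k *: y k) ->
  Sfin rho (x - \sum_(k < N') b k *: y k) ->
  \sum_(k < N) a k = \sum_(k < N') b k.
Proof.
move=> ha hb.
pose M := (N + N')%N.
pose a' k := if (k < N)%N then a k else 0.
pose b' k := if (k < N')%N then b k else 0.
have hNM : (N <= M)%N by rewrite leq_addr.
have hN'M : (N' <= M)%N by rewrite leq_addl.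
have ea : \sum_(k < N) a k *: y k = \sum_(k < M) a' k *: y k.
  rewrite (pad_sum (fun k => a k *: y k) hNM); apply: eq_bigr => k _.
  by rewrite /a'; case: ifP => //; rewrite scale0r.
have eb : \sum_(k < N') b k *: y k = \sum_(k < M) b' k *: y k.
  rewrite (pad_sum (fun k => b k *: y k) hN'M); apply: eq_bigr => k _.
  by rewrite /b'; case: ifP => //; rewrite scale0r.
have hd : Sfin rho (\sum_(k < M) (a' k - b' k) *: y k).
  have -> : \sum_(k < M) (a' k - b' k) *: y k =
     (x - \sum_(k < N') b k *: y k) - (x - \sum_(k < N) a k *: y k).
    rewrite opprB addrC -addrA addKr ea eb -sumrB.
    by apply: eq_bigr => k _; rewrite scalerBl.
  exact: SfinB.
have hab := indep_seq (a := fun k => a' k - b' k) hd.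
rewrite (pad_sum a hNM) (pad_sum b hN'M); apply: eq_bigr => k _.
by apply/eqP; rewrite -/(a' k) -/(b' k) -subr_eq0; apply/eqP; apply: hab.
Qed.

Definition Wy := [set x | exists na : nat * (nat -> K),
  Sfin rho (x - \sum_(k < na.1) na.2 k *: y k)].

Definition gy x := match pselect (Wy x) with
  | left h => \sum_(k < (sval (cid h)).1) (sval (cid h)).2 k
  | right _ => 0 end.

Lemma gyE x N (a : nat -> K) : Sfin rho (x - \sum_(k < N) a k *: y k) -> gy x = \sum_(k < N) a k.
Proof.
move=> h; rewrite /gy; case: pselect => [hw|hw]; last first.
  by exfalso; apply: hw; exists (N, a).
case: (cid hw) => [[N' a'] h'] /=; exact: rep_eq h' h.
Qed.

Lemma Wy_good : good Wy gy Wy gy.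
Proof.
have addrep : forall x x', Wy x -> Wy x' -> exists M (c : nat -> K),
    Sfin rho ((x + x') - \sum_(k < M) c k *: y k) /\
    \sum_(k < M) c k = gy x + gy x'.
  move=> x x' [[N a] /= ha] [[N' b] /= hb].
  pose M := (N + N')%N.
  have hNM : (N <= M)%N by rewrite leq_addr.
  have hN'M : (N' <= M)%N by rewrite leq_addl.
  exists M, (fun k => (if (k < N)%N then a k else 0) + (if (k < N')%N then b k else 0)).
  split.
    have -> : x + x' - \sum_(k < M) ((if (k < N)%N then a k else 0) +
        (if (k < N')%N then b k else 0)) *: y k =
        (x - \sum_(k < N) a k *: y k) + (x' - \sum_(k < N') b k *: y k).
      rewrite (pad_sum (fun k => a k *: y k) hNM) (pad_sum (fun k => b k *: y k) hN'M).
      rewrite addrACA -opprD -big_split /=; congr (_ - _); apply: eq_bigr => k _.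
      by rewrite scalerDl; case: ifP; case: ifP; rewrite ?scale0r.
    exact: SfinD.
  rewrite big_split /= -!pad_sum // (gyE ha) (gyE hb) //.
split.
- by [].
- move=> x x' hx hx'; have [M [c [h _]]] := addrep x x' hx hx'.
  by exists (M, c).
- move=> s x [[N a] /= ha]; exists (N, fun k => s * a k) => /=.
  have -> : s *: x - \sum_(k < N) (s * a k) *: y k = s *: (x - \sum_(k < N) a k *: y k).
    rewrite scalerBr scaler_sumr; congr (_ - _); apply: eq_bigr => k _.
    by rewrite scalerA.
  exact: SfinZ.
- move=> x x' hx hx'; have [M [c [h1 h2]]] := addrep x x' hx hx'.
  by rewrite (gyE h1).
- move=> s x [[N a] /= ha].
  have h : Sfin rho (s *: x - \sum_(k < N) (s * a k) *: y k).
    have -> : s *: x - \sum_(k < N) (s * a k) *: y k = s *: (x - \sum_(k < N) a k *: y k).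
      rewrite scalerBr scaler_sumr; congr (_ - _); apply: eq_bigr => k _.
      by rewrite scalerA.
    exact: SfinZ.
  rewrite (gyE ha) mulr_sumr; exact: (gyE (x := s *: x) (N := N) (a := fun k => s * a k) h).
- by [].
Qed.

Lemma gy_S x : Sfin rho x -> gy x = 0.
Proof.
move=> h; have h' : Sfin rho (x - \sum_(k < 0) (fun _ => 0 : K) k *: y k).
  by rewrite big_ord0 subr0.
have := @gyE x 0%N (fun _ => 0) h'. by rewrite big_ord0.
Qed.

Lemma Wy_S x : Sfin rho x -> Wy x.
Proof. by move=> h; exists (0%N, fun _ => 0) => /=; rewrite big_ord0 subr0. Qed.

Lemma Wy_y n : Wy (y n).
Proof.
pose a := fun k : nat => if k == n then 1 else 0 : K.
exists (n.+1, a) => /=.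
rewrite big_ord_recr /= /a eqxx scale1r big1 ?add0r ?subrr; first exact: Sfin0.
by move=> i _; rewrite ifN ?scale0r // neq_ltn ltn_ord.
Qed.

Lemma gy_y n : gy (y n) = 1.
Proof.
pose a := fun k : nat => if k == n then 1 else 0 : K.
have h : Sfin rho (y n - \sum_(k < n.+1) a k *: y k).
  rewrite big_ord_recr /= /a eqxx scale1r big1 ?add0r ?subrr; first exact: Sfin0.
  by move=> i _; rewrite ifN ?scale0r // neq_ltn ltn_ord.
rewrite (gyE h) big_ord_recr /= /a eqxx big1 ?add0r // => i _.
by rewrite ifN // neq_ltn ltn_ord.
Qed.
End Seq.

Lemma a_to_b (I : Type) (p : I -> X -> \bar R) :
  (forall i, ext_seminorm nK (p i)) ->
  forall tauF, finest_lc_topology nK (induced_topology p) tauF ->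
  metrizable_top R tauF ->
  forall rho, ext_seminorm nK rho -> continuous_ext (induced_topology p) rho ->
     finite_dim_quotient rho.
Proof.
move=> Hp tauF [hlc [hFt hfin]] [d [[d0 [deq [dsym dtri]]] hdT]] rho Hrho hcont.
apply: contrapT => hnf.
have [I' [r [hr hFeq]]] := hlc.
pose dball n := [set z | d 0 z < (n.+1%:R)^-1].
have hinv n : 0 < (n.+1%:R : R)^-1 by rewrite invr_gt0.
have hdball n : tauF (dball n).
  rewrite -hdT => x hx; exists ((n.+1%:R)^-1 - d 0 x); split; first by rewrite subr_gt0.
  move=> z /= hz; have := dtri 0 x z; rewrite /dball /= in hx *; move: (n.+1%:R)^-1 hx hz => a hx hz h; lra.
have habs n x : exists t : K, t != 0 /\ dball n (t *: x).
  have := hdball n; rewrite hFeq => /(_ 0) h.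
  have d00 : dball n 0 by rewrite /dball /= (proj2 (deq 0 0) erefl).
  have [J [fJ [e [e0 hJ]]]] := h d00.
  have [M hM] := finite_bound (fun j => r j x) fJ.
  have D0 : 0 < `|M| + 1 by rewrite ltr_pwDr.
  have hpos : 0 < e / (`|M| + 1) by rewrite divr_gt0.
  have [t ht] := nK_emb hpos.
  exists t; split.
    by apply/eqP => t0; move: ht; rewrite t0 nK0 => h0; move: hpos; rewrite -h0 ltxx.
  apply: hJ => j Jj /=; rewrite subr0 snZ // ht lte_fin.
  have hrx : r j x < `|M| + 1.
    apply: (le_lt_trans (hM j Jj)); apply: (le_lt_trans (ler_norm M)).
    by rewrite ltrDl.
  by rewrite mulrAC ltr_pdivrMr // ltr_pM2l.
have hnf' : forall n (v : 'I_n -> X), exists x, forall c : 'I_n -> K,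
    ~ Sfin rho (x - \sum_(i < n) c i *: v i).
  move=> n v; apply: contrapT => hn; apply: hnf; exists n, v => x.
  apply: contrapT => hx; apply: hn; exists x => c hc; apply: hx; exists c.
  exact: hc.
have hex : forall (f : nat -> X) n, exists z, dball n z /\
     forall c : 'I_n -> K, ~ Sfin rho (z - \sum_(i < n) c i *: f i).
  move=> f n; have [x hx] := hnf' n (fun i => f i).
  have [t [t0 ht]] := habs n x.
  exists (t *: x); split => // c hc; apply: (hx (fun i => t^-1 * c i)).
  have -> : x - \sum_(i < n) (t^-1 * c i) *: f i =
      t^-1 *: (t *: x - \sum_(i < n) c i *: f i).
    rewrite scalerBr scalerA mulVf // scale1r scaler_sumr.
    by congr (_ - _); apply: eq_bigr => i _; rewrite scalerA.
  exact: SfinZ.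
have [y hy] := @build_seq rho (fun n z => dball n z) hex.
have hyd n : dball n (y n) := proj1 (hy n).
have hyi : forall n (c : 'I_n -> K), ~ Sfin rho (y n - \sum_(i < n) c i *: y i).
  by move=> n c; exact: (proj2 (hy n) c).
have [f [fD [fZ fW]]] := ext_exists (Wy_S y (Sfin0 Hrho)) (Wy_good Hrho hyi).
pose q x := nK (f x).
have hq : seminorm nK q.
  split; first by move=> a x; rewrite /q fZ nKM.
  by move=> x x'; rewrite /q fD; exact: nKD.
have qS x : Sfin rho x -> q x = 0.
  move=> hx; rewrite /q fW; last exact: Wy_S.
  by rewrite (gy_S Hrho hyi hx) nK0.
have qy n : q (y n) = 1.
  by rewrite /q fW ?(gy_y Hrho hyi) ?nK1 //; exact: Wy_y.
pose sig := induced_topology (fun (_ : unit) x => (q x)%:E).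
have hsig_lc : locally_convex_topology nK sig by exists unit, (fun _ => q).
have hsig_tau : sig `<=` induced_topology p.
  move=> U hU x0 Ux0.
  have [J [fJ [e [e0 hJ]]]] := hU x0 Ux0.
  have hn : nbhs (rho 0) [set z | (z < 1%:E)%E].
    by rewrite es0 //; apply: open_ereal_lt'; rewrite lte_fin ltr01.
  have [W0 [hW0 [W00 W0s]]] := hcont 0 _ hn.
  have [J0 [fJ0 [e1 [e10 hJ0]]]] := hW0 0 W00.
  exists J0; split => //; exists e1; split => //.
  move=> x hx; apply: hJ => j Jj /=.
  have : W0 (x - x0) by apply: hJ0 => i Ji; rewrite subr0; exact: hx i Ji.
  move=> /W0s /= hlt; rewrite qS ?lte_fin //.
  rewrite /Sfin /X_fin /=; apply: (lt_trans hlt); exact: ltry.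
have hsigF := hfin _ hsig_lc hsig_tau.
have hop : sig [set x | q (x - 0) < 1].
  exact: (@sn_ball_open unit (fun _ => q) (fun _ => hq) tt 0 1).
have := hsigF _ hop; rewrite -hdT => /(_ 0) [|rr [rr0 hrr]].
  by rewrite /= subrr sn0 // ltr01.
have rr20 : 0 < rr^-1 by rewrite invr_gt0.
pose N := Num.Def.archi_bound rr^-1.
have hN : (N.+1%:R : R)^-1 < rr.
  rewrite -[X in _ < X]invrK ltf_pV2 ?posrE ?invr_gt0 //.
  apply: lt_trans (archi_boundP (ltW rr20)) _.
  by rewrite ltr_nat.
have := hrr (y N) (lt_trans (hyd N) hN).
by rewrite /= subr0 qy ltxx.
Qed.

Lemma main_gen (I : Type) (p : I -> X -> \bar R) :
  (forall i, ext_seminorm nK (p i)) ->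
  hausdorff_top (induced_topology p) ->
  countable_nbhd_base (induced_topology p) 0 ->
  forall tauF : set (set X),
    finest_lc_topology nK (induced_topology p) tauF ->
    (metrizable_top R tauF <->
     (forall rho : X -> \bar R, ext_seminorm nK rho ->
        continuous_ext (induced_topology p) rho -> finite_dim_quotient rho)).
Proof.
move=> Hp hH hC tauF hF; split.
  by move=> hm; apply: a_to_b hF hm.
by move=> hb; apply: b_to_a.
Qed.
End Gen.

Unset Implicit Arguments.

Theorem theorem5p10 (R : realType) :
  (forall (X : lmodType R) (I : Type) (p : I -> X -> \bar R),
     (forall i, ext_seminorm (fun a : R => `|a|) (p i)) ->
     hausdorff_top (induced_topology p) ->
     countable_nbhd_base (induced_topology p) 0 ->
     forall tauF : set (set X),
       finest_lc_topology (fun a : R => `|a|) (induced_topology p) tauF ->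
       (metrizable_top R tauF <->
        (forall rho : X -> \bar R,
           ext_seminorm (fun a : R => `|a|) rho ->
           continuous_ext (induced_topology p) rho ->
           finite_dim_quotient rho))) /\
  (forall (X : lmodType R[i]) (I : Type) (p : I -> X -> \bar R),
     (forall i, ext_seminorm (@cmod R) (p i)) ->
     hausdorff_top (induced_topology p) ->
     countable_nbhd_base (induced_topology p) 0 ->
     forall tauF : set (set X),
       finest_lc_topology (@cmod R) (induced_topology p) tauF ->
       (metrizable_top R tauF <->
        (forall rho : X -> \bar R,
           ext_seminorm (@cmod R) rho ->
           continuous_ext (induced_topology p) rho ->
           finite_dim_quotient rho))).
Proof.
split.
  move=> X I p; apply: main_gen.
  - exact: normr0.
  - by move=> a; exact: normr_ge0.
  - by move=> a; exact: normr0_eq0.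
  - by move=> a b; exact: normrM.
  - by move=> a b; exact: ler_normD.
  - exact: normr1.
  - exact: normrN1.
  - by move=> r r0; exists r; exact: gtr0_norm.
move=> X I p; apply: main_gen.
- exact: Normc.normc0.
- by move=> [a b]; rewrite /cmod /=; exact: sqrtr_ge0.
- by move=> a; exact: Normc.eq0_normc.
- by move=> a b; exact: Normc.normcM.
- by move=> a b; exact: le_normcD.
- exact: Normc.normc1.
- by rewrite /cmod normcN; exact: Normc.normc1.
- move=> r r0; exists (r%:C)%C; rewrite /cmod /Normc.normc /=.
  by rewrite expr0n /= addr0 sqrtr_sqr gtr0_norm.
Qed.
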